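(* Let $d\ge1$ and let $\mathcal H\neq\{0\}$ be a Hilbert space which is continuously embedded in $\mathscr S'(\mathbb R^d)$, and such that for some constant $C_0\ge 1$, for every $f\in\mathcal H$ and $x,\xi\in\mathbb R^d$, $e^{i\langle\cdot,\xi\rangle}f(\cdot-x)\in\mathcal H$ and $\|e^{i\langle\cdot,\xi\rangle}f(\cdot-x)\|_{\mathcal H}\le C_0\|f\|_{\mathcal H}$. Let $\phi(x)=e^{-\frac12|x|^2}$. Then there is a constant $C>0$ such that $$|(f,\phi)|\le C\|f\|_{\mathcal H},\qquad f\in\mathcal H.$$
   Context: $\mathscr S'(\mathbb R^d)$ denotes the space of tempered distributions; $(f,\phi)$ denotes the (sesquilinear) extension of the $L^2(\mathbb R^d)$ scalar product to the pairing of $f\in\mathscr S'(\mathbb R^d)$ with $\phi\in\mathscr S(\mathbb R^d)$; $\langle\cdot,\cdot\rangle$ is the standard inner product on $\mathbb R^d$. *)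

(* Defs.v *)
From mathcomp Require Import all_boot all_order all_algebra.
From mathcomp Require Import all_classical all_reals all_analysis.
From mathcomp Require Export complex.
Set Implicit Arguments. Unset Strict Implicit. Unset Printing Implicit Defensive.
Import Order.TTheory GRing.Theory Num.Theory.
Local Open Scope ring_scope.

Section Defs.
Variable R : realType.
Variable d : nat.

Local Notation V := 'rV[R]_d.

Definition dotR (x y : V) : R := \sum_(j < d) x ord0 j * y ord0 j.
Definition sqnormR (x : V) : R := dotR x x.

Definition unitv (j : 'I_d) : V := delta_mx ord0 j.

Definition pderiv (j : 'I_d) (u : V -> R) : V -> R :=
  fun x => derive u x (unitv j).

Definition iterD (js : seq 'I_d) (u : V -> R) : V -> R :=
  foldr (fun j g => pderiv j g) u js.

Definition monom (alpha : 'I_d -> nat) (x : V) : R :=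
  \prod_(j < d) x ord0 j ^+ alpha j.

Definition schwartzR (u : V -> R) : Prop :=
  (forall (js : seq 'I_d) (j : 'I_d) (x : V), derivable (iterD js u) x (unitv j)) /\
  (forall (alpha : 'I_d -> nat) (js : seq 'I_d),
      exists M : R, forall x : V, `|monom alpha x * iterD js u x| <= M).

Definition schwartz (psi : V -> R[i]) : Prop :=
  schwartzR (fun x => complex.Re (psi x)) /\ schwartzR (fun x => complex.Im (psi x)).

Definition cabs (z : R[i]) : R :=
  Num.sqrt (complex.Re z ^+ 2 + complex.Im z ^+ 2).

Definition seminorms_le (N : nat) (M : R) (psi : V -> R[i]) : Prop :=
  forall (alpha : 'I_d -> nat) (js : seq 'I_d),
    (\sum_(j < d) alpha j <= N)%N -> (size js <= N)%N ->
    forall x : V,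
      `|monom alpha x * iterD js (fun y => complex.Re (psi y)) x| <= M /\
      `|monom alpha x * iterD js (fun y => complex.Im (psi y)) x| <= M.

(* a tempered distribution, acting through the sesquilinear pairing
   psi |-> (T, psi): conjugate-linear and continuous on S(R^d) *)
Definition tempered (T : (V -> R[i]) -> R[i]) : Prop :=
  (forall (a : R[i]) (psi1 psi2 : V -> R[i]), schwartz psi1 -> schwartz psi2 ->
      T (fun x => a * psi1 x + psi2 x) = conjc a * T psi1 + T psi2) /\
  (exists (N : nat) (K : R), forall (psi : V -> R[i]) (M : R),
      schwartz psi -> seminorms_le N M psi -> cabs (T psi) <= K * M).

Definition cexpi (theta : R) : R[i] := (cos theta +i* sin theta)%C.

(* adjoint of the time-frequency shift f |-> e^{i<.,xi>} f(. - x) acting on test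
   functions:  (e^{i<.,xi>} f(.-x), psi) = (f, tfs_adj x xi psi)  *)
Definition tfs_adj (x xi : V) (psi : V -> R[i]) : V -> R[i] :=
  fun s => cexpi (- dotR (s + x) xi) * psi (s + x).

Definition gauss (x : V) : R[i] := ((expR (- (sqnormR x / 2)))%:C)%C.

End Defs.

Section Hilbert.
Variable R : realType.
Variable H : lmodType R[i].

Definition inner_product (ip : H -> H -> R[i]) : Prop :=
  (forall (a : R[i]) (f g h : H), ip (a *: f + g) h = a * ip f h + ip g h) /\
  (forall f g : H, ip g f = conjc (ip f g)) /\
  (forall f : H, complex.Im (ip f f) = 0 /\ 0 <= complex.Re (ip f f)) /\
  (forall f : H, ip f f = 0 -> f = 0).

Definition hnorm (ip : H -> H -> R[i]) (f : H) : R := Num.sqrt (complex.Re (ip f f)).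

Definition hcomplete (ip : H -> H -> R[i]) : Prop :=
  forall u : nat -> H,
    (forall e : R, 0 < e -> exists N : nat, forall m n : nat, (N <= m)%N -> (N <= n)%N ->
        hnorm ip (u m - u n) < e) ->
    exists l : H, forall e : R, 0 < e -> exists N : nat, forall n : nat, (N <= n)%N ->
        hnorm ip (u n - l) < e.

Definition hilbert (ip : H -> H -> R[i]) : Prop := inner_product ip /\ hcomplete ip.

(* iota : H -> S'(R^d) is a continuous (for the weak-* topology of S') linear
   injection; iota f psi stands for the pairing (f, psi). *)
Definition cont_embedding (d : nat) (ip : H -> H -> R[i])
    (iota : H -> ('rV[R]_d -> R[i]) -> R[i]) : Prop :=
  (forall f : H, tempered (iota f)) /\
  (forall (a : R[i]) (f g : H) (psi : 'rV[R]_d -> R[i]), schwartz psi ->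
      iota (a *: f + g) psi = a * iota f psi + iota g psi) /\
  (forall f g : H, (forall psi, schwartz psi -> iota f psi = iota g psi) -> f = g) /\
  (forall psi : 'rV[R]_d -> R[i], schwartz psi ->
     forall (f : H) (e : R), 0 < e -> exists delta : R, 0 < delta /\
       forall g : H, hnorm ip (g - f) < delta -> cabs (iota g psi - iota f psi) < e).

End Hilbert.

(* Main.v *)
Require Import Defs.
From mathcomp Require Import all_boot all_order all_algebra.
From mathcomp Require Import all_classical all_reals all_analysis.
From mathcomp Require Import complex ring lra.
Import Order.TTheory GRing.Theory Num.Theory numFieldNormedType.Exports.
Local Open Scope classical_set_scope.
Local Open Scope ring_scope.

Section Aux.
Variable R : realType.
Variable d : nat.
Local Notation V := 'rV[R]_d.

Inductive polyfun : (V -> R) -> Prop :=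
| pf_cst c : polyfun (fun _ => c)
| pf_coord k : polyfun (fun x => x ord0 k)
| pf_add p q : polyfun p -> polyfun q -> polyfun (fun x => p x + q x)
| pf_mul p q : polyfun p -> polyfun q -> polyfun (fun x => p x * q x).
Arguments pf_add {p q}. Arguments pf_mul {p q}.

Lemma coord_derive (x v : V) k : is_derive x v (fun y : V => y ord0 k) (v ord0 k).
Proof.
have E : \forall h \near (0:R)^',
    h^-1 *: (((fun y : V => y ord0 k) \o shift x) (h *: v) - x ord0 k) = v ord0 k.
  near=> h.
  have h0 : h != 0 by near: h; exact: nbhs_dnbhs_neq.
  rewrite /= !mxE addrK /GRing.scale /= mulKf //.
split; [exact: (is_cvg_near_cst _ E) | rewrite /derive; apply: lim_near_cst; [exact: Rhausdorff| exact: E]].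
Unshelve. all: by end_near.
Qed.

Lemma derive_line (f : V -> R) x v :
  'D_v f x = 'D_1 (fun h : R => f (h *: v + x)) 0.
Proof.
rewrite /derive.
suff -> : (fun h : R => h^-1 *: ((f \o shift x) (h *: v) - f x)) =
  (fun h : R => h^-1 *: (((fun h : R => f (h *: v + x)) \o shift 0) (h *: 1) - f (0 *: v + x))) by [].
by rewrite funeqE => h /=; rewrite addr0 scale0r add0r [_%:A]mulr1.
Qed.

Lemma exp_derive (q : V -> R) dq x v : is_derive x v q dq ->
  is_derive x v (fun y => expR (q y)) (expR (q x) * dq).
Proof.
move=> [Dq Vq].
have l1 : is_derive (0:R) 1 (fun h : R => q (h *: v + x)) dq.
  split; first exact: ((derivable1P q x v).1 Dq).
  by rewrite -derive_line.
have e0 : (fun h : R => q (h *: v + x)) 0 = q x by rewrite /= scale0r add0r.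
have l2 : is_derive ((fun h : R => q (h *: v + x)) 0) 1 expR (expR (q x)).
  by rewrite e0; exact: is_derive_expR.
have := is_derive1_comp l2 l1 => -[D2 V2].
split.
  exact: ((derivable1P (fun y => expR (q y)) x v).2 D2).
by rewrite derive_line; exact: V2.
Qed.

Lemma pf_deriv p : polyfun p -> forall v, exists p', polyfun p' /\
  forall x, is_derive x v p (p' x).
Proof.
elim=> [c|k|p1 q1 _ IH1 _ IH2|p1 q1 P1 IH1 Q1 IH2] v.
- exists (fun _ => 0); split; first exact: pf_cst.
  by move=> x; exact: is_derive_cst.
- exists (fun _ => v ord0 k); split; first exact: pf_cst.
  by move=> x; exact: coord_derive.
- have [a [Pa Da]] := IH1 v; have [b [Pb Db]] := IH2 v.
  exists (fun x => a x + b x); split; first exact: pf_add.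
  move=> x; exact: (is_deriveD (Da x) (Db x)).
- have [a [Pa Da]] := IH1 v; have [b [Pb Db]] := IH2 v.
  exists (fun x => p1 x * b x + q1 x * a x); split.
    exact: (pf_add (pf_mul P1 Pb) (pf_mul Q1 Pa)).
  move=> x; exact: (is_deriveM (Da x) (Db x)).
Qed.


Lemma pf_sum (I : Type) (r : seq I) (P : pred I) (F : I -> V -> R) :
  (forall i, polyfun (F i)) -> polyfun (fun x => \sum_(i <- r | P i) F i x).
Proof.
move=> HF; elim: r => [|i r IH].
  have -> : (fun x : V => \sum_(i <- [::] | P i) F i x) = (fun _ => 0).
    by apply/funext => x; rewrite big_nil.
  exact: pf_cst.
case Pi: (P i).
  have -> : (fun x : V => \sum_(j <- i :: r | P j) F j x) =
     (fun x => F i x + \sum_(j <- r | P j) F j x).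
    by apply/funext => x; rewrite big_cons Pi.
  exact: pf_add.
have -> : (fun x : V => \sum_(j <- i :: r | P j) F j x) =
     (fun x => \sum_(j <- r | P j) F j x).
  by apply/funext => x; rewrite big_cons Pi.
exact: IH.
Qed.

Lemma pf_prod (I : Type) (r : seq I) (P : pred I) (F : I -> V -> R) :
  (forall i, polyfun (F i)) -> polyfun (fun x => \prod_(i <- r | P i) F i x).
Proof.
move=> HF; elim: r => [|i r IH].
  have -> : (fun x : V => \prod_(i <- [::] | P i) F i x) = (fun _ => 1).
    by apply/funext => x; rewrite big_nil.
  exact: pf_cst.
case Pi: (P i).
  have -> : (fun x : V => \prod_(j <- i :: r | P j) F j x) =
     (fun x => F i x * \prod_(j <- r | P j) F j x).
    by apply/funext => x; rewrite big_cons Pi.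
  exact: pf_mul.
have -> : (fun x : V => \prod_(j <- i :: r | P j) F j x) =
     (fun x => \prod_(j <- r | P j) F j x).
  by apply/funext => x; rewrite big_cons Pi.
exact: IH.
Qed.

Lemma pf_exp p n : polyfun p -> polyfun (fun x => p x ^+ n).
Proof.
move=> Pp; elim: n => [|n IH].
  have -> : (fun x => p x ^+ 0) = (fun _ => 1) by apply/funext => x; rewrite expr0.
  exact: pf_cst.
have -> : (fun x => p x ^+ n.+1) = (fun x => p x * p x ^+ n).
  by apply/funext => x; rewrite exprS.
exact: pf_mul.
Qed.

Lemma pf_monom alpha : polyfun (monom alpha).
Proof.
rewrite /monom; apply: pf_prod => j; apply: pf_exp; exact: pf_coord.
Qed.

Definition q0 (x : V) : R := - (sqnormR x / 2).
Definition g0 (x : V) : R := expR (q0 x).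

Lemma pf_q0 : polyfun q0.
Proof.
have -> : q0 = (fun x => (- 2^-1) * sqnormR x).
  by apply/funext => x; rewrite /q0 mulNr mulrC.
apply: pf_mul; first exact: pf_cst.
rewrite /sqnormR /dotR; apply: pf_sum => j; apply: pf_mul; exact: pf_coord.
Qed.

Lemma gp_deriv p : polyfun p -> forall v, exists p', polyfun p' /\
  forall x, is_derive x v (fun y => p y * g0 y) (p' x * g0 x).
Proof.
move=> Pp v.
have [dq [Pdq Ddq]] := @pf_deriv _ pf_q0 v.
have [a [Pa Da]] := @pf_deriv _ Pp v.
exists (fun x => p x * dq x + a x); split.
  exact: pf_add (pf_mul Pp Pdq) Pa.
move=> x.
have Dg : is_derive x v g0 (g0 x * dq x) by exact: exp_derive.
apply: is_derive_eq (is_deriveM (Da x) Dg) _.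
rewrite /GRing.scale /=. ring.
Qed.

Lemma gp_iter p : polyfun p -> forall js : seq 'I_d, exists p', polyfun p' /\
  Defs.iterD js (fun y => p y * g0 y) = (fun y => p' y * g0 y).
Proof.
move=> Pp; elim=> [|j js [p' [Pp' E]]]; first by exists p.
have [p'' [Pp'' D]] := @gp_deriv _ Pp' (@unitv R d j).
exists p''; split => //=.
rewrite E /pderiv; apply/funext => x.
by rewrite derive_val.
Qed.


Lemma sqnorm_ge0 (x : V) : 0 <= sqnormR x.
Proof. by rewrite /sqnormR /dotR; apply: sumr_ge0 => j _; rewrite -expr2 sqr_ge0. Qed.

Lemma coord_sq_le (x : V) k : x ord0 k ^+ 2 <= sqnormR x.
Proof.
rewrite /sqnormR /dotR (bigD1 k) //= expr2 lerDl.
by apply: sumr_ge0 => j _; rewrite -expr2 sqr_ge0.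
Qed.

Lemma pow_mono (y : R) m k : 1 <= y -> y ^+ m <= y ^+ (m + k).
Proof.
move=> y1; rewrite exprD ler_peMr //.
  by rewrite exprn_ge0 // (le_trans _ y1).
by rewrite exprn_ege1.
Qed.

Lemma pf_bound p : polyfun p -> exists K n, 0 <= K /\
  forall x, `|p x| <= K * (1 + sqnormR x) ^+ n.
Proof.
elim=> [c|k|p1 q1 _ [K1 [n1 [K1p B1]]] _ [K2 [n2 [K2p B2]]]|
        p1 q1 _ [K1 [n1 [K1p B1]]] _ [K2 [n2 [K2p B2]]]].
- by exists `|c|, 0%N; split => // x; rewrite expr0 mulr1.
- exists 1, 1%N; split => // x; rewrite expr1 mul1r.
  have := coord_sq_le x k; have := real_normK (num_real (x ord0 k)).
  have := normr_ge0 (x ord0 k).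
  set a := x ord0 k; set b := `|a|; set s := sqnormR x => h1 h2 h3.
  nra.
- exists (K1 + K2), (n1 + n2)%N; split; first exact: addr_ge0.
  move=> x; have s0 := sqnorm_ge0 x.
  have y1 : 1 <= 1 + sqnormR x by rewrite lerDl.
  apply: (le_trans (ler_normD _ _)).
  rewrite mulrDl; apply: lerD.
    apply: (le_trans (B1 x)); apply: ler_wpM2l => //; exact: pow_mono.
  apply: (le_trans (B2 x)); apply: ler_wpM2l => //; rewrite addnC; exact: pow_mono.
- exists (K1 * K2), (n1 + n2)%N; split; first exact: mulr_ge0.
  move=> x; rewrite normrM exprD mulrACA.
  by apply: ler_pM; [exact: normr_ge0|exact: normr_ge0|exact: B1|exact: B2].
Qed.

Lemma exp_poly_bound n (s : R) : 0 <= s ->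
  (1 + s) ^+ n * expR (- (s / 2)) <= (2 * n.+1%:R) ^+ n.
Proof.
move=> s0.
set m : R := n.+1%:R.
have m0 : 0 < m by rewrite /m ltr0n.
set t := s / (2 * m).
have t0 : 0 <= t by rewrite /t divr_ge0 // mulr_ge0 // ltW.
have h1 : 1 + s <= 2 * m * expR t.
  apply: (@le_trans _ _ (2 * m * (1 + t))).
    rewrite mulrDr mulr1 /t mulrCA divff ?mulr1; last by rewrite mulf_neq0 // gt_eqF.
    rewrite lerD2r. have : 1 <= m by rewrite /m ler1n. lra.
  apply: ler_wpM2l; first by rewrite mulr_ge0 // ltW.
  exact: expR_ge1Dx.
have h2 : (1 + s) ^+ n <= (2 * m) ^+ n * expR (n%:R * t).
  rewrite expRM_natl -exprMn; apply: lerXn2r => //.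
    by rewrite nnegrE addr_ge0.
  by rewrite nnegrE mulr_ge0 // ?mulr_ge0 // ?ltW // expR_ge0.
apply: (le_trans (ler_wpM2r (expR_ge0 _) h2)).
rewrite -mulrA -expRD -[X in _ <= X]mulr1; apply: ler_wpM2l.
  by rewrite exprn_ge0 // mulr_ge0 // ltW.
rewrite expR_le1 /t.
have nm : n%:R <= m by rewrite /m ler_nat.
rewrite subr_le0 mulrA. 
rewrite ler_pdivrMr ?mulr_gt0 //.
rewrite -mulrA [2 * m]mulrC mulrA -mulrA.
rewrite [m * 2]mulrC mulKf ?pnatr_eq0 //; nra.
Qed.


Lemma schwartz_gp p : polyfun p -> schwartzR (fun x => p x * g0 x).
Proof.
move=> Pp; split.
- move=> js j x; have [p' [Pp' E]] := @gp_iter _ Pp js; rewrite E.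
  have [p'' [_ D]] := @gp_deriv _ Pp' (@unitv R d j).
  by case: (D x).
- move=> alpha js; have [p' [Pp' E]] := @gp_iter _ Pp js; rewrite E.
  have [K [n [K0 B]]] := @pf_bound _ (pf_mul (pf_monom alpha) Pp').
  exists (K * (2 * n.+1%:R) ^+ n) => x.
  rewrite mulrA normrM /g0 (ger0_norm (expR_ge0 _)).
  apply: le_trans (ler_wpM2r (expR_ge0 _) (B x)) _.
  rewrite -mulrA ler_wpM2l //; exact: exp_poly_bound (sqnorm_ge0 x).
Qed.

Lemma schwartz_gauss : schwartz (@gauss R d).
Proof.
split.
  have -> : (fun x => complex.Re (gauss x)) = (fun x : V => (fun _ => 1) x * g0 x).
    by apply/funext => x; rewrite /gauss /g0 /q0 /= mul1r.
  exact: schwartz_gp (pf_cst 1).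
have -> : (fun x => complex.Im (gauss x)) = (fun x : V => (fun _ => 0) x * g0 x).
  by apply/funext => x; rewrite /gauss /g0 /q0 /= mul0r.
exact: schwartz_gp (pf_cst 0).
Qed.

End Aux.

Lemma cabsZ (R : realType) (t : R) (z : R[i]) : 0 <= t -> cabs (t%:C * z)%C = t * cabs z.
Proof.
move=> t0; case: z => a b; rewrite /cabs /=.
have -> : (t * a - 0 * b) ^+ 2 + (t * b + 0 * a) ^+ 2 = t ^+ 2 * (a ^+ 2 + b ^+ 2) by ring.
by rewrite sqrtrM ?sqr_ge0 // sqrtr_sqr ger0_norm.
Qed.

Theorem lemma2p1 (R : realType) (d : nat) (H : lmodType R[i])
  (ip : H -> H -> R[i]) (iota : H -> ('rV[R]_d -> R[i]) -> R[i]) (C0 : R) :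
  (0 < d)%N ->
  hilbert ip ->
  (exists f : H, f <> 0) ->
  cont_embedding ip iota ->
  1 <= C0 ->
  (forall (f : H) (x xi : 'rV[R]_d), exists g : H,
      (forall psi, schwartz psi -> iota g psi = iota f (tfs_adj x xi psi)) /\
      hnorm ip g <= C0 * hnorm ip f) ->
  exists C : R, 0 < C /\ forall f : H, cabs (iota f (@gauss R d)) <= C * hnorm ip f.
Proof.
move=> _ [[ipL [ipC [ipP ipD]]] _] _ [_ [iL [_ iC]]] _ _.
have sg := schwartz_gauss R d.
have i0 : iota 0 (@gauss R d) = 0.
  have := iL 1 0 0 _ sg; rewrite scaler0 addr0 mul1r => h.
  by apply: (@addrI _ (iota 0 (@gauss R d))); rewrite addr0 -h.
have iZ : forall a f, iota (a *: f) (@gauss R d) = a * iota f (@gauss R d).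
  by move=> a f; have := iL a f 0 _ sg; rewrite addr0 i0 addr0.
have ip0 : forall h, ip 0 h = 0.
  move=> h; have := ipL 1 0 0 h; rewrite scaler0 addr0 mul1r => e.
  by apply: (@addrI _ (ip 0 h)); rewrite addr0 -e.
have ipZ : forall a f h, ip (a *: f) h = a * ip f h.
  by move=> a f h; have := ipL a f 0 h; rewrite addr0 ip0 addr0.
have hnormZ : forall t f, 0 <= t -> hnorm ip (t%:C%C *: f) = t * hnorm ip f.
  move=> t f t0; rewrite /hnorm ipZ ipC ipZ.
  have [Im0 _] := ipP f; move: Im0.
  case: (ip f f) => a b /= ->.
  have -> : t * (t * a - 0 * 0) - 0 * - (t * 0 + 0 * a) = t ^+ 2 * a by ring.
  by rewrite sqrtrM ?sqr_ge0 // sqrtr_sqr ger0_norm.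
have [delta [dp Hd]] := iC _ sg 0 1 ltr01.
exists (2 / delta); split; first by rewrite divr_gt0.
move=> f.
have h0 : 0 <= hnorm ip f by rewrite /hnorm sqrtr_ge0.
have [hz|hp] := eqVneq (hnorm ip f) 0.
  have f0 : f = 0.
    apply: ipD; move: hz; rewrite /hnorm => /eqP; rewrite sqrtr_eq0 => hle.
    have [Im0 Re0] := ipP f; move: Im0 Re0 hle.
    case: (ip f f) => a b /= -> a0 a0'.
    by have -> : a = 0 by apply/eqP; rewrite eq_le a0' a0.
  rewrite f0 i0 /cabs /= expr0n /= addr0 sqrtr0.
  by rewrite -f0 hz mulr0.
have hpos : 0 < hnorm ip f by rewrite lt_def hp h0.
set h := hnorm ip f in h0 hp hpos *.
set t := delta / (2 * h).
have tp : 0 < t by rewrite divr_gt0 // mulr_gt0.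
have th : t * h = delta / 2.
  by rewrite /t; field.
have hg : hnorm ip (t%:C%C *: f - 0) < delta.
  rewrite subr0 (hnormZ _ _ (ltW tp)) -/h th.
  by rewrite ltr_pdivrMr // ltr_pMr // ltr1n.
have := Hd _ hg; rewrite i0 subr0 iZ (@cabsZ R t _ (ltW tp)) => hlt.
set c := cabs _ in hlt *.
have c0 : 0 <= c by rewrite /c /cabs sqrtr_ge0.
have e1 : 2 / delta * h = 2 * h / delta by rewrite mulrAC.
rewrite e1 ler_pdivlMr //.
have e2 : c * delta = (t * c) * (2 * h).
  by rewrite /t; field.
rewrite e2; nra.
Qed.
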